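(* For integers $r,k\ge 0$ with $r\ne k$ and real $\alpha>\max\{k,r\}$, $$\sum_{n=1}^\infty\frac{H_{n+\alpha}}{(n+r)(n+k)}=\frac{k-\alpha}{k-r}\left\{\frac{H_{\alpha-k}^2+H_{\alpha-k}^{(2)}}{\alpha-k}-\sum_{j=1}^k\frac{H_{\alpha+j-k}}{j(\alpha+j-k)}\right\}+\frac{\alpha-r}{k-r}\left\{\frac{H_{\alpha-r}^2+H_{\alpha-r}^{(2)}}{\alpha-r}-\sum_{j=1}^r\frac{H_{\alpha+j-r}}{j(\alpha+j-r)}\right\}.$$
   Context: Shifted harmonic numbers: for a real $\alpha$ that is not a negative integer, $H_\alpha := \sum_{k=1}^\infty\left(\frac1k-\frac1{k+\alpha}\right)$ and, for integers $m\ge 2$, $H_\alpha^{(m)} := \sum_{k=1}^\infty\left(\frac1{k^m}-\frac1{(k+\alpha)^m}\right)=\zeta(m)-\zeta(m,\alpha+1)$, where $\zeta$ is the Riemann zeta function and $\zeta(s,\alpha+1)=\sum_{n=1}^\infty (n+\alpha)^{-s}$ is the Hurwitz zeta function. Powers such as $H_\alpha^2$ mean $(H_\alpha)^2$. Empty sums are $0$. *)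

(* Defs.v *)
From Stdlib Require Import Reals Lra Lia Classical ClassicalEpsilon.
Open Scope R_scope.

Definition psum1 (f : nat -> R) (N : nat) : R :=
  match N with
  | O => 0
  | S M => sum_f_R0 (fun i => f (S i)) M
  end.

Definition has_sum1 (f : nat -> R) (l : R) : Prop := Un_cv (psum1 f) l.

(* Value of sum_{n=1}^oo f n (0 by convention if divergent; only used
   for convergent series below). *)
Definition series1 (f : nat -> R) : R :=
  match excluded_middle_informative (exists l, has_sum1 f l) with
  | left H => proj1_sig (constructive_indefinite_description _ H)
  | right _ => 0
  end.

(* Shifted harmonic number H_alpha = sum_{k>=1} (1/k - 1/(k+alpha)). *)
Definition Hsh (a : R) : R :=
  series1 (fun k => / INR k - / (INR k + a)).

(* H_alpha^(m) = sum_{k>=1} (1/k^m - 1/(k+alpha)^m). *)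
Definition Hsh_m (m : nat) (a : R) : R :=
  series1 (fun k => / (INR k ^ m) - / ((INR k + a) ^ m)).

Definition fsum1 (n : nat) (g : nat -> R) : R := psum1 g n.

(* Main.v *)
Require Import Defs.
From Stdlib Require Import Reals.
From Stdlib Require Import Lra Lia Classical ClassicalEpsilon.
Open Scope R_scope.

Fixpoint sm (f : nat -> R) (N : nat) : R :=
  match N with O => 0 | S n => sm f n + f (S n) end.

Lemma psum1_sm f N : psum1 f N = sm f N.
Proof.
  destruct N as [|M]; [reflexivity|]. simpl.
  induction M as [|M IH]; simpl; [lra|]. rewrite IH. reflexivity.
Qed.

Lemma sm_ext f g N : (forall i, (1 <= i <= N)%nat -> f i = g i) -> sm f N = sm g N.
Proof.
  induction N as [|N IH]; intros H; simpl; [reflexivity|].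
  rewrite IH by (intros; apply H; lia). rewrite (H (S N)) by lia. reflexivity.
Qed.

Lemma sm_plus f g N : sm (fun i => f i + g i) N = sm f N + sm g N.
Proof. induction N; simpl; [lra|]. rewrite IHN. ring. Qed.
Lemma sm_minus f g N : sm (fun i => f i - g i) N = sm f N - sm g N.
Proof. induction N; simpl; [lra|]. rewrite IHN. ring. Qed.
Lemma sm_scal c f N : sm (fun i => c * f i) N = c * sm f N.
Proof. induction N; simpl; [lra|]. rewrite IHN. ring. Qed.

Lemma sm_nonneg f N : (forall i, (1 <= i)%nat -> 0 <= f i) -> 0 <= sm f N.
Proof. intros H; induction N; simpl; [lra|]. pose proof (H (S N) ltac:(lia)); lra. Qed.

Lemma sm_mono_N f M N : (forall i, (1 <= i)%nat -> 0 <= f i) -> (M <= N)%nat -> sm f M <= sm f N.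
Proof.
  intros H HMN; induction HMN; [lra|]. simpl. pose proof (H (S m) ltac:(lia)); lra.
Qed.

Lemma sm_le f g N : (forall i, (1 <= i <= N)%nat -> f i <= g i) -> sm f N <= sm g N.
Proof.
  induction N as [|N IH]; intros H; simpl; [lra|].
  pose proof (IH ltac:(intros; apply H; lia)). pose proof (H (S N) ltac:(lia)). lra.
Qed.

Lemma sm_shift f n : sm f (S n) = f 1%nat + sm (fun i => f (S i)) n.
Proof. induction n; simpl in *; [lra|]. rewrite IHn. ring. Qed.

Lemma sm_rev g n : sm (fun p => g (S n - p)%nat) n = sm g n.
Proof.
  induction n as [|n IH]; [reflexivity|].
  rewrite sm_shift. simpl (S (S n) - 1)%nat.
  replace (sm (fun i => g (S (S n) - S i)%nat) n) with (sm (fun i => g (S n - i)%nat) n) by reflexivity.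
  rewrite IH. simpl. ring.
Qed.

Lemma sm_add_shift c m N : sm (fun n => c (n + m)%nat) N = sm c (N + m) - sm c m.
Proof. induction N; simpl; [lra|]. rewrite IHN. ring. Qed.

Lemma has_sum1_sm f l : has_sum1 f l <-> Un_cv (sm f) l.
Proof.
  unfold has_sum1, Un_cv. split; intros H e He; destruct (H e He) as [N HN]; exists N;
  intros n Hn; specialize (HN n Hn); rewrite psum1_sm in *; auto.
Qed.

Lemma series1_eq f l : has_sum1 f l -> series1 f = l.
Proof.
  intros H. unfold series1. destruct excluded_middle_informative as [e|n].
  - destruct (constructive_indefinite_description _ e) as [l' Hl']. simpl.
    exact (UL_sequence _ _ _ Hl' H).
  - exfalso; apply n; exists l; exact H.
Qed.

Lemma Un_cv_ext u v l : (forall n, u n = v n) -> Un_cv u l -> Un_cv v l.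
Proof. intros E H e He; destruct (H e He) as [N HN]; exists N; intros n Hn; rewrite <- E; auto. Qed.

Lemma Un_cv_const c : Un_cv (fun _ => c) c.
Proof. intros e He; exists O; intros; unfold R_dist; rewrite Rminus_diag, Rabs_R0; lra. Qed.

Lemma Un_cv_scal c u l : Un_cv u l -> Un_cv (fun n => c * u n) (c * l).
Proof. intros H; apply CV_mult; [apply Un_cv_const|exact H]. Qed.

Lemma Un_cv_shift_sub u l m : Un_cv u l -> Un_cv (fun N => u (N - m)%nat) l.
Proof. intros H e He; destruct (H e He) as [N HN]; exists (N + m)%nat; intros n Hn; apply HN; lia. Qed.

Lemma Un_cv_shift_add u l m : Un_cv u l -> Un_cv (fun N => u (N + m)%nat) l.
Proof. intros H e He; destruct (H e He) as [N HN]; exists N; intros n Hn; apply HN; lia. Qed.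

Lemma Un_cv_le_ev u l c M : Un_cv u l -> (forall n, (M <= n)%nat -> u n <= c) -> l <= c.
Proof.
  intros H Hle. destruct (Rle_or_lt l c) as [|Hlt]; [assumption|exfalso].
  destruct (H (l - c) ltac:(lra)) as [N HN].
  specialize (HN (N + M)%nat ltac:(lia)). specialize (Hle (N + M)%nat ltac:(lia)).
  unfold R_dist in HN. apply Rabs_def2 in HN. lra.
Qed.

Lemma Un_cv_inv_lin c : 0 <= c -> Un_cv (fun n => / (INR n + 1 + c)) 0.
Proof.
  intros Hc. apply cv_infty_cv_0. intros M. destruct (INR_unbounded M) as [N HN].
  exists N. intros n Hn. apply le_INR in Hn. lra.
Qed.

Lemma div_le_div a b c d : 0 < b -> 0 < d -> a * d <= c * b -> a / b <= c / d.
Proof.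
  intros Hb Hd H. unfold Rdiv. apply Rmult_le_reg_r with (b * d). nra.
  replace (a * / b * (b * d)) with (a * d) by (field; lra).
  replace (c * / d * (b * d)) with (c * b) by (field; lra). exact H.
Qed.

Lemma tele N : sm (fun k => / INR k - / (INR k + 1)) N = 1 - / (INR N + 1).
Proof.
  induction N; cbn [sm]. simpl. rewrite Rplus_0_l, Rinv_1; ring.
  rewrite IHN, S_INR. ring.
Qed.

Lemma INR_ge1 k : (1 <= k)%nat -> 1 <= INR k.
Proof. intros H. apply le_INR in H. simpl in H. exact H. Qed.

Definition P (x : R) (N : nat) := sm (fun k => / INR k - / (INR k + x)) N.
Definition Q (x : R) (N : nat) := sm (fun k => / (INR k ^ 2) - / ((INR k + x) ^ 2)) N.

Lemma P_term x k : 0 <= x -> (1 <= k)%nat ->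
  0 <= / INR k - / (INR k + x) <= 2 * x * (/ INR k - / (INR k + 1)).
Proof.
  intros Hx Hk. pose proof (INR_ge1 k Hk) as H1. set (y := INR k) in *.
  replace (/ y - / (y + x)) with (x / (y * (y + x))) by (field; lra).
  replace (2 * x * (/ y - / (y + 1))) with ((2 * x) / (y * (y + 1))) by (field; lra).
  split. apply Rmult_le_pos; [lra|]. left; apply Rinv_0_lt_compat; nra.
  apply div_le_div; try nra.
  assert (0 <= x * y * (y + 2 * x - 1)) by (apply Rmult_le_pos; nra). nra.
Qed.

Lemma Q_term x k : 0 <= x -> (1 <= k)%nat ->
  0 <= / (INR k ^ 2) - / ((INR k + x) ^ 2) <= 2 * (/ INR k - / (INR k + 1)).
Proof.
  intros Hx Hk. pose proof (INR_ge1 k Hk) as H1. set (y := INR k) in *.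
  replace (/ (y ^ 2) - / ((y + x) ^ 2)) with ((x * (2 * y + x)) / (y ^ 2 * (y + x) ^ 2)) by (field; lra).
  replace (2 * (/ y - / (y + 1))) with (2 / (y * (y + 1))) by (field; lra).
  split. apply Rmult_le_pos; [nra|]. left; apply Rinv_0_lt_compat.
  apply Rmult_lt_0_compat; apply pow_lt; lra.
  apply div_le_div. apply Rmult_lt_0_compat; apply pow_lt; lra. nra.
  assert (H2 : 0 <= x * (2 * y + x) * y) by (apply Rmult_le_pos; [apply Rmult_le_pos|]; lra).
  assert (H3 : x * (2 * y + x) * y * (y + 1) <= x * (2 * y + x) * y * (2 * y)) by (apply Rmult_le_compat_l; lra).
  assert (H4 : 0 <= y ^ 2 * y ^ 2) by (apply Rmult_le_pos; apply pow_le; lra).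
  simpl in *. nra.
Qed.

Lemma P_growing x : 0 <= x -> Un_growing (P x).
Proof. intros Hx n. unfold P; cbn [sm]. pose proof (P_term x (S n) Hx ltac:(lia)). lra. Qed.
Lemma Q_growing x : 0 <= x -> Un_growing (Q x).
Proof. intros Hx n. unfold Q; cbn [sm]. pose proof (Q_term x (S n) Hx ltac:(lia)). lra. Qed.

Lemma P_nonneg x N : 0 <= x -> 0 <= P x N.
Proof. intros Hx. apply sm_nonneg. intros i Hi. apply (P_term x i Hx Hi). Qed.
Lemma Q_nonneg x N : 0 <= x -> 0 <= Q x N.
Proof. intros Hx. apply sm_nonneg. intros i Hi. apply (Q_term x i Hx Hi). Qed.

Lemma P_cv x : 0 <= x -> Un_cv (P x) (Hsh x).
Proof.
  intros Hx. assert (Hub : has_ub (P x)).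
  { exists (2 * x). intros y [n ->]. unfold P.
    eapply Rle_trans. apply sm_le with (g := fun k => 2 * x * (/ INR k - / (INR k + 1))).
    intros i Hi; apply (P_term x i Hx); lia.
    rewrite sm_scal, tele. assert (0 < / (INR n + 1)) by (apply Rinv_0_lt_compat; pose proof (pos_INR n); lra).
    nra. }
  destruct (growing_cv _ (P_growing x Hx) Hub) as [l Hl].
  unfold Hsh. rewrite (series1_eq _ l). exact Hl. apply has_sum1_sm. exact Hl.
Qed.

Lemma Q_cv x : 0 <= x -> Un_cv (Q x) (Hsh_m 2 x).
Proof.
  intros Hx. assert (Hub : has_ub (Q x)).
  { exists 2. intros y [n ->]. unfold Q.
    eapply Rle_trans. apply sm_le with (g := fun k => 2 * (/ INR k - / (INR k + 1))).
    intros i Hi; apply (Q_term x i Hx); lia.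
    rewrite sm_scal, tele. assert (0 < / (INR n + 1)) by (apply Rinv_0_lt_compat; pose proof (pos_INR n); lra).
    nra. }
  destruct (growing_cv _ (Q_growing x Hx) Hub) as [l Hl].
  unfold Hsh_m. rewrite (series1_eq _ l). exact Hl. apply has_sum1_sm. exact Hl.
Qed.

Lemma P_le x N : 0 <= x -> P x N <= Hsh x.
Proof. intros Hx; apply growing_ineq; [apply P_growing|apply P_cv]; auto. Qed.
Lemma Q_le x N : 0 <= x -> Q x N <= Hsh_m 2 x.
Proof. intros Hx; apply growing_ineq; [apply Q_growing|apply Q_cv]; auto. Qed.
Lemma Hsh_nonneg x : 0 <= x -> 0 <= Hsh x.
Proof. intros Hx; pose proof (P_le x O Hx); simpl in *; unfold P in *; simpl in *; lra. Qed.

Lemma P_succ x N : 0 <= x -> P (x + 1) N = P x N + / (1 + x) - / (INR N + 1 + x).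
Proof.
  intros Hx. induction N. unfold P; simpl. field. lra.
  unfold P in *; cbn [sm]. rewrite IHN, S_INR. pose proof (pos_INR N). field. lra.
Qed.

Lemma Hsh_succ x : 0 <= x -> Hsh (x + 1) = Hsh x + / (1 + x).
Proof.
  intros Hx. apply (UL_sequence (P (x + 1))). apply P_cv; lra.
  apply Un_cv_ext with (fun N => (P x N + / (1 + x)) - / (INR N + 1 + x)).
  intros; rewrite P_succ; auto.
  replace (Hsh x + / (1 + x)) with ((Hsh x + / (1 + x)) - 0) by ring.
  apply CV_minus. apply CV_plus. apply P_cv; auto. apply Un_cv_const. apply Un_cv_inv_lin; auto.
Qed.

Definition A (x : R) (N : nat) := sm (fun i => / (INR i + x)) N.

Lemma Hsh_shift x j : 0 <= x -> Hsh (x + INR j) = Hsh x + A x j.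
Proof.
  intros Hx. induction j. unfold A; simpl. rewrite Rplus_0_r. ring.
  rewrite S_INR. replace (x + (INR j + 1)) with ((x + INR j) + 1) by ring.
  rewrite Hsh_succ by (pose proof (pos_INR j); lra). rewrite IHj. unfold A; cbn [sm]. 
  rewrite S_INR. replace (1 + (x + INR j)) with (INR j + 1 + x) by ring. ring.
Qed.

Section Key.
Variable b : R.
Hypothesis Hb : 0 < b.

Definition dl (p : nat) := / INR p - / (INR p + b).
Definition Hn (m : nat) := sm (fun i => / INR i) m.
Definition X (N : nat) := sm (fun n => Hn (pred n) * dl n) N.
Definition RR (N : nat) := sm (fun p => dl p * P (INR p + b) (N - p)) N.
Definition C (N : nat) := sm (fun p => Hsh (INR p + b) * (/ INR p - / (INR p + b))) N.
Definition G (M N : nat) := sm (fun p => dl p * P (INR p + b) (N - p)) M.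

Lemma dl_nonneg p : (1 <= p)%nat -> 0 <= dl p.
Proof. intros Hp. unfold dl. apply (P_term b p); lra || lia. Qed.

Lemma Hn_nonneg m : 0 <= Hn m.
Proof. apply sm_nonneg. intros i Hi. left. apply Rinv_0_lt_compat. pose proof (INR_ge1 i Hi); lra. Qed.

Lemma INR_pos p : (1 <= p)%nat -> 0 < INR p.
Proof. intros H; pose proof (INR_ge1 p H); lra. Qed.

Lemma RR_X N : RR N = 2 * X N.
Proof.
  induction N as [|N IH]. unfold RR, X; simpl; ring.
  unfold RR. cbn [sm]. rewrite Nat.sub_diag. unfold P at 2. cbn [sm]. rewrite Rmult_0_r, Rplus_0_r.
  rewrite (sm_ext _ (fun p => dl p * P (INR p + b) (N - p) +
       (dl (S N) * (/ INR p + / INR (S N - p))))).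
  2:{ intros p Hp. replace (S N - p)%nat with (S (N - p)) by lia. unfold P at 1. cbn [sm].
      fold (P (INR p + b) (N - p)).
      assert (E1 : INR (S (N - p)) = INR (S N) - INR p).
      { rewrite <- minus_INR by lia. f_equal; lia. }
      rewrite E1. pose proof (INR_pos p ltac:(lia)). assert (INR p + 1 <= INR (S N)).
      { rewrite <- S_INR. apply le_INR. lia. }
      unfold dl. field. repeat split; lra. }
  rewrite sm_plus, sm_scal, sm_plus. fold (RR N). rewrite IH.
  rewrite (sm_rev (fun q => / INR q) N). fold (Hn N). unfold X. cbn [sm]. simpl (pred (S N)). ring.
Qed.

Lemma P_nonneg' p N : 0 <= P (INR p + b) N.
Proof. apply P_nonneg. pose proof (pos_INR p); lra. Qed.

Lemma RR_le_C N : RR N <= C N.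
Proof.
  unfold RR, C. apply sm_le. intros i Hi. pose proof (dl_nonneg i ltac:(lia)) as Hd. unfold dl in *.
  rewrite (Rmult_comm (Hsh _)).
  apply Rmult_le_compat_l. exact Hd. apply P_le. pose proof (pos_INR i); lra.
Qed.

Lemma G_le M N : (M <= N)%nat -> G M N <= RR N.
Proof.
  intros H. unfold G, RR. apply sm_mono_N; auto. intros i Hi.
  apply Rmult_le_pos. apply dl_nonneg; auto. apply P_nonneg'.
Qed.

Lemma G_cv M : Un_cv (G M) (C M).
Proof.
  induction M. unfold G, C; simpl. apply Un_cv_const.
  unfold G, C. cbn [sm]. apply CV_plus. exact IHM.
  rewrite Rmult_comm. fold (dl (S M)). apply Un_cv_scal.
  apply (Un_cv_shift_sub (P (INR (S M) + b))). apply P_cv. pose proof (pos_INR (S M)); lra.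
Qed.

Lemma C_ident N : C N = Hsh b * P b N + X N - (P b N) ^ 2 / 2 + Q b N / 2.
Proof.
  induction N. unfold C, X, P, Q; cbn [sm]; unfold Rdiv; ring.
  unfold C, X, P, Q in *. cbn [sm]. rewrite IHN.
  rewrite (Rplus_comm (INR (S N)) b), Hsh_shift by lra. simpl (pred (S N)).
  assert (HA : A b (S N) = Hn N - sm (fun k => / INR k - / (INR k + b)) N + / (INR (S N) + b)).
  { unfold A, Hn. cbn [sm]. rewrite sm_minus. 
    replace (fun i => / (INR i + b)) with (fun i => / (INR i + b)) by reflexivity. ring. }
  rewrite HA. pose proof (INR_pos (S N) ltac:(lia)). unfold dl. field. lra.
Qed.

Lemma X_growing : Un_growing X.
Proof.
  intros n. unfold X. cbn [sm]. pose proof (Hn_nonneg (pred (S n))). pose proof (dl_nonneg (S n) ltac:(lia)).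
  nra.
Qed.

Lemma X_ub : has_ub X.
Proof.
  exists (Hsh b * Hsh b + Hsh_m 2 b / 2). intros y [N ->].
  pose proof (RR_le_C N) as H1. rewrite RR_X, C_ident in H1.
  pose proof (P_le b N ltac:(lra)). pose proof (P_nonneg b N ltac:(lra)).
  pose proof (Q_le b N ltac:(lra)). pose proof (Hsh_nonneg b ltac:(lra)).
  assert (Hsh b * P b N <= Hsh b * Hsh b) by (apply Rmult_le_compat_l; lra).
  assert (0 <= P b N ^ 2) by (apply pow_le; lra). lra.
Qed.

Lemma key : Un_cv C (Hsh b ^ 2 + Hsh_m 2 b).
Proof.
  destruct (growing_cv _ X_growing X_ub) as [F HF].
  assert (HC : Un_cv C (2 * F)).
  { assert (Hup : forall M, C M <= 2 * F).
    { intros M. apply (Un_cv_le_ev (G M) (C M) (2 * F) M). apply G_cv.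
      intros n Hn. eapply Rle_trans. apply G_le; exact Hn. rewrite RR_X.
      pose proof (growing_ineq _ _ X_growing HF n). lra. }
    intros e He. destruct (HF (e / 2) ltac:(lra)) as [N0 HN0]. exists N0. intros n Hn.
    specialize (HN0 n Hn). specialize (Hup n). pose proof (RR_le_C n). rewrite RR_X in H.
    unfold R_dist in *. apply Rabs_def2 in HN0. apply Rabs_def1; lra. }
  assert (H1 : Un_cv (fun N => C N - X N) (2 * F - F)) by (apply CV_minus; auto).
  assert (H2 : Un_cv (fun N => C N - X N)
     (Hsh b * Hsh b - Hsh b ^ 2 / 2 + Hsh_m 2 b / 2)).
  { apply Un_cv_ext with (fun N => Hsh b * P b N - P b N ^ 2 / 2 + Q b N / 2).
    intros; rewrite C_ident; ring.
    apply CV_plus. apply CV_minus. apply Un_cv_scal. apply P_cv; lra.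
    unfold Rdiv. apply CV_mult; [|apply Un_cv_const]. simpl. 
    apply Un_cv_ext with (fun N => P b N * (P b N * 1)). intros; ring.
    apply CV_mult. apply P_cv; lra. apply CV_mult. apply P_cv; lra. apply Un_cv_const.
    unfold Rdiv. apply CV_mult; [|apply Un_cv_const]. apply Q_cv; lra. }
  pose proof (UL_sequence _ _ _ H1 H2) as HF2.
  replace (Hsh b ^ 2 + Hsh_m 2 b) with (2 * F) by (simpl in *; lra). exact HC.
Qed.

End Key.

Definition cc (b : R) (p : nat) := Hsh (INR p + b) * (/ INR p - / (INR p + b)).

Lemma shifted_cv b m : 0 < b ->
  Un_cv (sm (fun n => cc b (n + m)%nat)) (Hsh b ^ 2 + Hsh_m 2 b - sm (cc b) m).
Proof.
  intros Hb. apply Un_cv_ext with (fun N => sm (cc b) (N + m) - sm (cc b) m).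
  intros; rewrite sm_add_shift; reflexivity.
  apply CV_minus; [|apply Un_cv_const].
  apply (Un_cv_shift_add (sm (cc b))). exact (key b Hb).
Qed.

Lemma fsum_eq b m alpha : b = alpha - INR m -> 0 < b ->
  sm (cc b) m = (alpha - INR m) * fsum1 m (fun j => Hsh (alpha + INR j - INR m)
                             / (INR j * (alpha + INR j - INR m))).
Proof.
  intros -> Hb. unfold fsum1. rewrite psum1_sm, <- sm_scal. apply sm_ext. intros j Hj.
  unfold cc. replace (INR j + (alpha - INR m)) with (alpha + INR j - INR m) by ring.
  pose proof (INR_ge1 j ltac:(lia)). field. split; lra.
Qed.

Theorem theorem2p2 (r k : nat) (alpha : R) :
  r <> k -> alpha > INR k -> alpha > INR r ->
  has_sum1 (fun n => Hsh (INR n + alpha) / ((INR n + INR r) * (INR n + INR k)))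
    ((INR k - alpha) / (INR k - INR r) *
       ((Hsh (alpha - INR k) ^ 2 + Hsh_m 2 (alpha - INR k)) / (alpha - INR k)
        - fsum1 k (fun j => Hsh (alpha + INR j - INR k)
                             / (INR j * (alpha + INR j - INR k))))
     + (alpha - INR r) / (INR k - INR r) *
       ((Hsh (alpha - INR r) ^ 2 + Hsh_m 2 (alpha - INR r)) / (alpha - INR r)
        - fsum1 r (fun j => Hsh (alpha + INR j - INR r)
                             / (INR j * (alpha + INR j - INR r))))).
Proof.
  intros Hrk Hk Hr.
  assert (Hkr : INR k - INR r <> 0).
  { intro E. apply (not_INR k r); [lia|lra]. }
  set (br := alpha - INR r). set (bk := alpha - INR k).
  assert (Hbr : 0 < br) by (unfold br; lra). assert (Hbk : 0 < bk) by (unfold bk; lra).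
  pose proof (fsum_eq br r alpha eq_refl Hbr) as Fr.
  pose proof (fsum_eq bk k alpha eq_refl Hbk) as Fk.
  set (fr := fsum1 r _) in *. set (fk := fsum1 k _) in *.
  apply has_sum1_sm.
  apply Un_cv_ext with (fun N => / (INR k - INR r) *
     (sm (fun n => cc br (n + r)%nat) N - sm (fun n => cc bk (n + k)%nat) N)).
  { intros N. rewrite <- sm_minus, <- sm_scal. apply sm_ext. intros n Hn.
    unfold cc. rewrite !plus_INR.
    replace (INR n + INR r + br) with (INR n + alpha) by (unfold br; ring).
    replace (INR n + INR k + bk) with (INR n + alpha) by (unfold bk; ring).
    pose proof (INR_ge1 n ltac:(lia)). pose proof (pos_INR r). pose proof (pos_INR k).
    field. repeat split; lra. }
  replace (_ + _) with (/ (INR k - INR r) *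
     ((Hsh br ^ 2 + Hsh_m 2 br - sm (cc br) r) - (Hsh bk ^ 2 + Hsh_m 2 bk - sm (cc bk) k))).
  2:{ rewrite Fr, Fk. fold br bk. replace (INR k - alpha) with (- bk) by (unfold bk; ring). field. repeat split; unfold br, bk in *; lra. }
  apply Un_cv_scal. apply CV_minus; apply shifted_cv; auto.
Qed.
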